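(* Let $G:=D^4\{(1,3),(2,3),(1,4),(2,4),(3,4)\}$ and consider the diagram consisting of $D(2)$, three copies of $D^2$ each receiving the inclusion $D(2)\hookrightarrow D^2$, and the maps $D^2\to G$ given by $(d_1,d_2)\mapsto(d_1,d_2,0,0)$, $(d_1,d_2)\mapsto(d_1,d_2,d_1d_2,0)$ and $(d_1,d_2)\mapsto(d_1,d_2,d_1d_2,d_1d_2)$ respectively. This diagram is a quasi-colimit diagram; that is, for all $\gamma_1,\gamma_2,\gamma_3:D^2\to\mathbb{R}$ whose restrictions to $D(2)$ coincide, there is a unique $\gamma:G\to\mathbb{R}$ with $\gamma(d_1,d_2,0,0)=\gamma_1(d_1,d_2)$, $\gamma(d_1,d_2,d_1d_2,0)=\gamma_2(d_1,d_2)$ and $\gamma(d_1,d_2,d_1d_2,d_1d_2)=\gamma_3(d_1,d_2)$ for all $(d_1,d_2):D^2$.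
   Context: Work in homotopy type theory. $\mathbb{R}$ is a set with a commutative unitary ring structure that is a $\mathbb{Q}$-algebra; $D:=\{d:\mathbb{R}\mid d^2=0\}$; for a finite set $\mathfrak p$ of lists of indices in $\{1,\dots,n\}$, $D^n\{\mathfrak p\}:=\{(d_1,\dots,d_n):D^n\mid d_{i_1}\cdots d_{i_k}=0\ \forall(i_1,\dots,i_k)\in\mathfrak p\}$, $D(2):=D^2\{(1,2)\}$. A Weil algebra is $\mathbb{R}[X_1,\dots,X_n]/(X_1^{m_1},\dots,X_n^{m_n},f_1,\dots,f_k)$ and $\mathrm{Spec}_{\mathbb{R}}\mathfrak W$ is the type of $\mathbb{R}$-algebra maps $\mathfrak W\to\mathbb{R}$ (the $D^n\{\mathfrak p\}$ are of this form). Axiom (Kock–Lawvere): for every Weil algebra the canonical map $\mathfrak W\to(\mathrm{Spec}_{\mathbb{R}}\mathfrak W\to\mathbb{R})$ is an equivalence. A quasi-colimit diagram is the image under $\mathrm{Spec}_{\mathbb{R}}$ of a finite limit diagram of Weil algebras; under the axiom, a finite diagram of such types is a quasi-colimit diagram iff applying $(-)\to\mathbb{R}$ yields a limit diagram. *)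

(* Defs.v *)
(* Plain Stdlib for the ring R (NO decidable equality on R: with decidable
   equality the Kock-Lawvere axiom is inconsistent); mathcomp only for the
   finite index types 'I_n and big sums. *)
From Stdlib Require Import Ring_theory List.
From mathcomp Require Import ssreflect ssrfun ssrbool eqtype ssrnat fintype bigop.
Set Implicit Arguments. Unset Strict Implicit. Unset Printing Implicit Defensive.

Record CRing := {
  car :> Type;
  rzero : car; rone : car;
  radd : car -> car -> car; rmul : car -> car -> car; ropp : car -> car;
  rth : ring_theory rzero rone radd rmul (fun x y => radd x (ropp y)) ropp (@eq car)
}.

Section Defs.
Variable R : CRing.

Fixpoint natr (k : nat) : R :=
  match k with 0 => rzero R | S k => radd (rone R) (natr k) end.

Definition is_Q_algebra : Prop :=
  forall k : nat, exists y : R, rmul (natr (S k)) y = rone R.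

Fixpoint rpow (x : R) (k : nat) : R :=
  match k with 0 => rone R | S k => rmul x (rpow x k) end.

(* ---- Polynomial ring R[X_0,...,X_{n-1}] as terms modulo the
        commutative-R-algebra identities (= the free commutative R-algebra) *)
Inductive poly (n : nat) : Type :=
| PConst : R -> poly n
| PVar : 'I_n -> poly n
| PAdd : poly n -> poly n -> poly n
| PMul : poly n -> poly n -> poly n
| POpp : poly n -> poly n.

Fixpoint ppow n (p : poly n) (k : nat) : poly n :=
  match k with 0 => PConst n (rone R) | S k => PMul p (ppow p k) end.

Fixpoint peval n (x : 'I_n -> R) (p : poly n) : R :=
  match p with
  | PConst r => r
  | PVar i => x i
  | PAdd p q => radd (peval x p) (peval x q)
  | PMul p q => rmul (peval x p) (peval x q)
  | POpp p => ropp (peval x p)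
  end.

Inductive peqv (n : nat) : poly n -> poly n -> Prop :=
| pe_refl p : peqv p p
| pe_sym p q : peqv p q -> peqv q p
| pe_trans p q r : peqv p q -> peqv q r -> peqv p r
| pe_add p p' q q' : peqv p p' -> peqv q q' -> peqv (PAdd p q) (PAdd p' q')
| pe_mul p p' q q' : peqv p p' -> peqv q q' -> peqv (PMul p q) (PMul p' q')
| pe_opp p p' : peqv p p' -> peqv (POpp p) (POpp p')
| pe_add0 p : peqv (PAdd (PConst n (rzero R)) p) p
| pe_addC p q : peqv (PAdd p q) (PAdd q p)
| pe_addA p q r : peqv (PAdd p (PAdd q r)) (PAdd (PAdd p q) r)
| pe_mul1 p : peqv (PMul (PConst n (rone R)) p) p
| pe_mulC p q : peqv (PMul p q) (PMul q p)
| pe_mulA p q r : peqv (PMul p (PMul q r)) (PMul (PMul p q) r)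
| pe_distr p q r : peqv (PMul (PAdd p q) r) (PAdd (PMul p r) (PMul q r))
| pe_oppr p : peqv (PAdd p (POpp p)) (PConst n (rzero R))
| pe_cadd a b : peqv (PConst n (radd a b)) (PAdd (PConst n a) (PConst n b))
| pe_cmul a b : peqv (PConst n (rmul a b)) (PMul (PConst n a) (PConst n b)).

(* ---- Weil algebra  W = R[X_0..X_{n-1}] / (X_i^{m_i}, f_1, ..., f_k) *)
Record WeilPresentation := {
  wn : nat;
  wm : 'I_wn -> nat;
  wf : list (poly wn)
}.
Arguments wm : clear implicits.

(* Spec_R W: R-algebra maps W -> R, i.e. points of R^n satisfying the relations *)
Definition Spec (W : WeilPresentation) : Type :=
  { x : 'I_(wn W) -> R |
    (forall i, rpow (x i) (wm W i) = rzero R) /\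
    (forall f, In f (wf W) -> peval x f = rzero R) }.

Definition in_ideal (W : WeilPresentation) (p : poly (wn W)) : Prop :=
  exists (a : 'I_(wn W) -> poly (wn W)) (bs : list (poly (wn W))),
    length bs = length (wf W) /\
    peqv p (PAdd
      (\big[@PAdd _/PConst _ (rzero R)]_(i < wn W) PMul (a i) (ppow (PVar i) (wm W i)))
      (fold_right (fun bf acc => PAdd (PMul bf.1 bf.2) acc)
                  (PConst _ (rzero R)) (combine bs (wf W)))).

(* Kock-Lawvere: the canonical map W -> (Spec W -> R), [p] |-> (x |-> p(x)),
   is a bijection (surjective, and injective on the quotient). *)
Definition KockLawvere : Prop :=
  forall W : WeilPresentation,
    (forall g : Spec W -> R, exists p : poly (wn W),
        forall x : Spec W, g x = peval (proj1_sig x) p) /\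
    (forall p : poly (wn W),
        (forall x : Spec W, peval (proj1_sig x) p = rzero R) -> in_ideal p).

Definition Dnp (n : nat) (P : list (list 'I_n)) : Type :=
  { d : 'I_n -> R |
    (forall i, rmul (d i) (d i) = rzero R) /\
    (forall l, In l P -> fold_right (fun i acc => rmul (d i) acc) (rone R) l = rzero R) }.

Definition vec4 (a b c e : R) (i : 'I_4) : R :=
  match nat_of_ord i with 0 => a | 1 => b | 2 => c | _ => e end.

End Defs.

(* Indices 1..n of the paper are 0..n-1 here. *)
Definition D2 (R : CRing) := @Dnp R 2 nil.
Definition D_2 (R : CRing) := @Dnp R 2 ((inord 0 :: inord 1 :: nil) :: nil).
Definition G_rel : list (list 'I_4) :=
  (inord 0 :: inord 2 :: nil) :: (inord 1 :: inord 2 :: nil) ::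
  (inord 0 :: inord 3 :: nil) :: (inord 1 :: inord 3 :: nil) ::
  (inord 2 :: inord 3 :: nil) :: nil.
Definition Gty (R : CRing) := @Dnp R 4 G_rel.

(* Main.v *)
Require Import Defs.
From Stdlib Require Import Ring Ring_theory List ProofIrrelevance.
From mathcomp Require Import ssreflect ssrfun ssrbool eqtype ssrnat fintype bigop.

Section S.
Variable R : CRing.
Add Ring Rr : (rth R).
Declare Scope cr_scope.
Local Notation "x + y" := (radd x y) : cr_scope.
Local Notation "x * y" := (rmul x y) : cr_scope.
Local Notation "x - y" := (radd x (ropp y)) : cr_scope.
Local Notation "- x" := (ropp x) : cr_scope.
Local Notation r0 := (rzero R).
Local Notation r1 := (rone R).
Local Open Scope cr_scope.

Definition dmul (p q : R * R) : R * R := (p.1 * q.1, p.1 * q.2 + p.2 * q.1).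

Fixpoint deval {n} (v : 'I_n -> R * R) (p : poly R n) : R * R :=
  match p with
  | PConst r => (r, r0)
  | PVar i => v i
  | PAdd p q => ((deval v p).1 + (deval v q).1, (deval v p).2 + (deval v q).2)
  | PMul p q => dmul (deval v p) (deval v q)
  | POpp p => (- (deval v p).1, - (deval v p).2)
  end.

Lemma deval_sound n v (p q : poly R n) : peqv p q -> deval v p = deval v q.
Proof.
induction 1; simpl; try congruence;
repeat match goal with |- context [deval v ?p] =>
  let a := fresh in let b := fresh in destruct (deval v p) as [a b] end;
rewrite /dmul /=; f_equal; ring.
Qed.

Lemma kl_D (KL : KockLawvere R) b : (forall d, d * d = r0 -> b * d = r0) -> b = r0.
Proof.
move=> H. pose W := @Build_WeilPresentation R 1 (fun _ => 2) nil.
have [_ inj] := KL W.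
have [] := inj (PMul (PConst _ b) (PVar R ord0)).
  move=> [x [Hx _]] /=. apply H. have := Hx ord0. simpl.
  have -> : forall y, y * (y * r1) = y * y by move=> y; ring. by [].
move=> a [bs [Hl Heq]].
destruct bs; [|discriminate].
have := @deval_sound _ (fun _ => (r0, r1)) _ _ Heq.
rewrite big_ord_recl big_ord0 /=.
case: (deval _ (a ord0)) => p q /=. case=> _ E.
transitivity (b * r1 + r0 * r0); [ring | rewrite E; ring].
Qed.

Lemma kl_D2 (KL : KockLawvere R) c :
  (forall u v, u * u = r0 -> v * v = r0 -> c * u * v = r0) -> c = r0.
Proof.
move=> H. apply (kl_D KL) => v hv. apply (kl_D KL) => u hu.
rewrite -(H u v hu hv); ring.
Qed.

Lemma sub0 (x y : R) : x - y = r0 -> x = y.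
Proof. move=> H. transitivity ((x - y) + y); [ring | rewrite H; ring]. Qed.

Lemma combine1 (L Rr t : R) : L = Rr -> t = L - Rr -> t = r0.
Proof. move=> -> ->; ring. Qed.

Lemma combine1' (L Rr t s : R) : L = Rr -> t - s = L - Rr -> t = s.
Proof. move=> E H. apply sub0. rewrite H E; ring. Qed.

Lemma combine2 (L1 R1 L2 R2 t : R) : L1 = R1 -> L2 = R2 -> t = (L2 - R2) - (L1 - R1) -> t = r0.
Proof. move=> -> -> ->; ring. Qed.

Arguments combine1 {L Rr t}.
Arguments combine1' {L Rr t s}.
Arguments combine2 {L1 R1 L2 R2 t}.

Lemma form2 (p : poly R 2) : exists a b c e, forall x : 'I_2 -> R,
  x (inord 0) * x (inord 0) = r0 -> x (inord 1) * x (inord 1) = r0 ->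
  peval x p = a + b * x (inord 0) + c * x (inord 1) + e * (x (inord 0) * x (inord 1)).
Proof.
induction p.
- exists c, r0, r0, r0 => x _ _ /=; ring.
- case: o => [[|[|m]] Hm].
  + exists r0, r1, r0, r0 => x _ _ /=.
    have -> : Ordinal Hm = inord 0 by apply val_inj; rewrite /= inordK.
    ring.
  + exists r0, r0, r1, r0 => x _ _ /=.
    have -> : Ordinal Hm = inord 1 by apply val_inj; rewrite /= inordK.
    ring.
  + by [].
- have [a [b [c [e H1]]]] := IHp1. have [a' [b' [c' [e' H2]]]] := IHp2.
  exists (a + a'), (b + b'), (c + c'), (e + e') => x h0 h1 /=.
  rewrite H1 // H2 //; ring.
- have [a [b [c [e H1]]]] := IHp1. have [a' [b' [c' [e' H2]]]] := IHp2.
  exists (a * a'), (a * b' + b * a'), (a * c' + c * a'), (a * e' + e * a' + b * c' + c * b')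
    => x h0 h1 /=.
  rewrite H1 // H2 //.
  set u := x (inord 0) in h0 *. set v := x (inord 1) in h1 *.
  transitivity (a * a' + (a * b' + b * a') * u + (a * c' + c * a') * v
     + (a * e' + e * a' + b * c' + c * b') * (u * v)
     + u * u * (b * b' + b * e' * v + e * b' * v + e * e' * v * v)
     + v * v * (c * c' + c * e' * u + e * c' * u)); [ring|].
  rewrite h0 h1; ring.
- have [a [b [c [e H1]]]] := IHp.
  exists (- a), (- b), (- c), (- e) => x h0 h1 /=.
  rewrite H1 //; ring.
Qed.

Definition rel4' (u v s t : R) :=
  u * u = r0 /\ v * v = r0 /\ s * s = r0 /\ t * t = r0 /\
  u * s = r0 /\ v * s = r0 /\ u * t = r0 /\ v * t = r0 /\ s * t = r0.

Definition f4 a b c e f k (x : 'I_4 -> R) :=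
  a + b * x (inord 0) + c * x (inord 1) + e * (x (inord 0) * x (inord 1))
  + f * x (inord 2) + k * x (inord 3).

Lemma form4 (p : poly R 4) : exists a b c e f k, forall x : 'I_4 -> R,
  rel4' (x (inord 0)) (x (inord 1)) (x (inord 2)) (x (inord 3)) ->
  peval x p = f4 a b c e f k x.
Proof.
rewrite /f4.
induction p.
- exists c, r0, r0, r0, r0, r0 => x _ /=; ring.
- case: o => [[|[|[|[|m]]]] Hm].
  + exists r0, r1, r0, r0, r0, r0 => x _ /=.
    have -> : Ordinal Hm = inord 0 by apply val_inj; rewrite /= inordK.
    ring.
  + exists r0, r0, r1, r0, r0, r0 => x _ /=.
    have -> : Ordinal Hm = inord 1 by apply val_inj; rewrite /= inordK.
    ring.
  + exists r0, r0, r0, r0, r1, r0 => x _ /=.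
    have -> : Ordinal Hm = inord 2 by apply val_inj; rewrite /= inordK.
    ring.
  + exists r0, r0, r0, r0, r0, r1 => x _ /=.
    have -> : Ordinal Hm = inord 3 by apply val_inj; rewrite /= inordK.
    ring.
  + by [].
- have [a [b [c [e [f [k H1]]]]]] := IHp1. have [a' [b' [c' [e' [f' [k' H2]]]]]] := IHp2.
  exists (a + a'), (b + b'), (c + c'), (e + e'), (f + f'), (k + k') => x h /=.
  rewrite H1 // H2 //; ring.
- have [a [b [c [e [f [k H1]]]]]] := IHp1. have [a' [b' [c' [e' [f' [k' H2]]]]]] := IHp2.
  exists (a * a'), (a * b' + b * a'), (a * c' + c * a'), (a * e' + e * a' + b * c' + c * b'),
    (a * f' + f * a'), (a * k' + k * a') => x h /=.
  rewrite H1 // H2 //.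
  move: h.
  set u := x (inord 0). set v := x (inord 1). set s := x (inord 2). set t := x (inord 3).
  move=> [huu [hvv [hss [htt [hus [hvs [hut [hvt hst]]]]]]]].
  transitivity (a * a' + (a * b' + b * a') * u + (a * c' + c * a') * v
     + (a * e' + e * a' + b * c' + c * b') * (u * v)
     + (a * f' + f * a') * s + (a * k' + k * a') * t
     + u * u * (b * b' + b * e' * v + e * b' * v + e * e' * v * v)
     + v * v * (c * c' + c * e' * u + e * c' * u)
     + u * s * (b * f' + f * b' + e * f' * v + f * e' * v)
     + u * t * (b * k' + k * b' + e * k' * v + k * e' * v)
     + v * s * (c * f' + f * c') + v * t * (c * k' + k * c')
     + s * s * (f * f') + s * t * (f * k' + k * f') + t * t * (k * k')); [ring|].
  rewrite huu hvv hss htt hus hvs hut hvt hst; ring.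
- have [a [b [c [e [f [k H1]]]]]] := IHp.
  exists (- a), (- b), (- c), (- e), (- f), (- k) => x h /=.
  rewrite H1 //; ring.
Qed.

Lemma mul1' y : y * (y * r1) = y * y. Proof. ring. Qed.
Lemma mulr1' y : y * r1 = y. Proof. ring. Qed.

Definition W2 := @Build_WeilPresentation R 2 (fun _ => 2) nil.

Definition toD2 (x : Spec W2) : D2 R.
refine (exist _ (proj1_sig x) _). split.
- move=> i. rewrite -mul1'. exact: (proj1 (proj2_sig x) i).
- by [].
Defined.

Definition toS2 (x : D2 R) : Spec W2.
refine (exist _ (proj1_sig x) _). split.
- move=> i. rewrite /= mul1'. exact: (proj1 (proj2_sig x) i).
- by [].
Defined.

Lemma gform2 (KL : KockLawvere R) (g : D2 R -> R) : exists a b c e, forall d : D2 R,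
  g d = a + b * proj1_sig d (inord 0) + c * proj1_sig d (inord 1)
        + e * (proj1_sig d (inord 0) * proj1_sig d (inord 1)).
Proof.
have [surj _] := KL W2.
have [p Hp] := surj (fun x => g (toD2 x)).
have [a [b [c [e He]]]] := form2 p.
exists a, b, c, e => d.
have Ed : d = toD2 (toS2 d).
  case: d => x hx. rewrite /toD2 /toS2 /=. f_equal. apply proof_irrelevance.
rewrite {1}Ed Hp He //; exact: (proj1 (proj2_sig d)).
Qed.

Definition relp (l : list 'I_4) : poly R 4 :=
  fold_right (fun i acc => PMul (PVar R i) acc) (PConst 4 r1) l.

Lemma peval_relp x l : peval x (relp l) = fold_right (fun i acc => x i * acc) r1 l.
Proof. elim: l => //= i l ->. by []. Qed.

Definition WG := @Build_WeilPresentation R 4 (fun _ => 2) (map relp G_rel).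

Definition toG (x : Spec WG) : Gty R.
refine (exist _ (proj1_sig x) _). split.
- move=> i. rewrite -mul1'. exact: (proj1 (proj2_sig x) i).
- move=> l Hl. rewrite -peval_relp. apply (proj2 (proj2_sig x)).
  exact: in_map.
Defined.

Definition toSG (x : Gty R) : Spec WG.
refine (exist _ (proj1_sig x) _). split.
- move=> i. rewrite /= mul1'. exact: (proj1 (proj2_sig x) i).
- move=> f Hf. have [l [El Hl]] := proj1 (in_map_iff _ _ _) Hf. rewrite -El peval_relp.
  exact: (proj2 (proj2_sig x)).
Defined.

Lemma relG (x : Gty R) : let y := proj1_sig x in
  rel4' (y (inord 0)) (y (inord 1)) (y (inord 2)) (y (inord 3)).
Proof.
case: x => y [Hs Hl] /=.
have L : forall i j, In (i :: j :: nil) G_rel -> y i * y j = r0.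
  move=> i j /Hl /=. by rewrite mulr1'.
rewrite /rel4'. split; first exact: Hs.
split; first exact: Hs. split; first exact: Hs. split; first exact: Hs.
split; first by apply L; rewrite /G_rel /=; tauto.
split; first by apply L; rewrite /G_rel /=; tauto.
split; first by apply L; rewrite /G_rel /=; tauto.
split; first by apply L; rewrite /G_rel /=; tauto.
by apply L; rewrite /G_rel /=; tauto.
Qed.

Lemma gformG (KL : KockLawvere R) (g : Gty R -> R) : exists a b c e f k, forall x : Gty R,
  g x = f4 a b c e f k (proj1_sig x).
Proof.
have [surj _] := KL WG.
have [p Hp] := surj (fun x => g (toG x)).
have [a [b [c [e [f [k He]]]]]] := form4 p.
exists a, b, c, e, f, k => d.
have Ed : d = toG (toSG d).
  case: d => x hx. rewrite /toG /toSG /=. f_equal. apply proof_irrelevance.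
rewrite {1}Ed Hp He //; exact: (relG d).
Qed.

Lemma vq0 (a b c e : R) : vec4 a b c e (inord 0) = a.
Proof. rewrite /vec4 inordK //. Qed.
Lemma vq1 (a b c e : R) : vec4 a b c e (inord 1) = b.
Proof. rewrite /vec4 inordK //. Qed.
Lemma vq2 (a b c e : R) : vec4 a b c e (inord 2) = c.
Proof. rewrite /vec4 inordK //. Qed.
Lemma vq3 (a b c e : R) : vec4 a b c e (inord 3) = e.
Proof. rewrite /vec4 inordK //. Qed.

Definition f2 (u v : R) (i : 'I_2) : R := if nat_of_ord i == 0 then u else v.
Lemma f2_0 u v : f2 u v (inord 0) = u. Proof. rewrite /f2 inordK //. Qed.
Lemma f2_1 u v : f2 u v (inord 1) = v. Proof. rewrite /f2 inordK //. Qed.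

Definition mkD2 u v (hu : u * u = r0) (hv : v * v = r0) : D2 R.
refine (exist _ (f2 u v) _). split.
- by case=> [[|m] Hm].
- by [].
Defined.

Definition mkD_2 u v (hu : u * u = r0) (hv : v * v = r0) (huv : u * v = r0) : D_2 R.
refine (exist _ (f2 u v) _). split.
- by case=> [[|m] Hm].
- move=> l [<-|[]] /=. by rewrite f2_0 f2_1 mulr1'.
Defined.

Definition mkG u v s t (h : rel4' u v s t) : Gty R.
refine (exist _ (vec4 u v s t) _).
case: h => [huu [hvv [hss [htt [hus [hvs [hut [hvt hst]]]]]]]].
split.
- by case=> [[|[|[|[|m]]]] Hm].
- rewrite /G_rel /= => l.
  by case=> [<-|[<-|[<-|[<-|[<-|[]]]]]]; rewrite /= ?vq0 ?vq1 ?vq2 ?vq3 mulr1'.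
Defined.

Lemma relA u v : u * u = r0 -> v * v = r0 -> rel4' u v r0 r0.
Proof.
move=> hu hv. rewrite /rel4'.
repeat split; auto; ring.
Qed.

Lemma relB u v : u * u = r0 -> v * v = r0 -> rel4' u v (u * v) r0.
Proof.
move=> hu hv. rewrite /rel4'.
have E1 : u * (u * v) = r0 by transitivity ((u * u) * v); [ring | rewrite hu; ring].
have E2 : v * (u * v) = r0 by transitivity ((v * v) * u); [ring | rewrite hv; ring].
have E3 : (u * v) * (u * v) = r0 by transitivity ((u * u) * (v * v)); [ring | rewrite hu; ring].
repeat split; auto; ring.
Qed.

Lemma relC u v : u * u = r0 -> v * v = r0 -> rel4' u v (u * v) (u * v).
Proof.
move=> hu hv. rewrite /rel4'.
have E1 : u * (u * v) = r0 by transitivity ((u * u) * v); [ring | rewrite hu; ring].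
have E2 : v * (u * v) = r0 by transitivity ((v * v) * u); [ring | rewrite hv; ring].
have E3 : (u * v) * (u * v) = r0 by transitivity ((u * u) * (v * v)); [ring | rewrite hu; ring].
repeat split; auto.
Qed.


Lemma mkD2_val u v hu hv : proj1_sig (mkD2 u v hu hv) = f2 u v.
Proof. by []. Qed.
Lemma mkG_val u v s t h : proj1_sig (mkG u v s t h) = vec4 u v s t.
Proof. by []. Qed.

Lemma main_sec (HQ : is_Q_algebra R) (KL : KockLawvere R)
  (g1 g2 g3 : D2 R -> R) :
  (forall (e : D_2 R) (d : D2 R),
     (forall i, proj1_sig d i = proj1_sig e i) -> g1 d = g2 d /\ g2 d = g3 d) ->
  let P := fun g : Gty R -> R =>
    forall (d : D2 R) (x : Gty R),
      let d1 := proj1_sig d (inord 0) in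
      let d2 := proj1_sig d (inord 1) in
      ((forall i, proj1_sig x i = vec4 d1 d2 (rzero R) (rzero R) i) -> g x = g1 d) /\
      ((forall i, proj1_sig x i = vec4 d1 d2 (rmul d1 d2) (rzero R) i) -> g x = g2 d) /\
      ((forall i, proj1_sig x i = vec4 d1 d2 (rmul d1 d2) (rmul d1 d2) i) -> g x = g3 d) in
  exists g : Gty R -> R, P g /\ (forall g' : Gty R -> R, P g' -> forall x, g' x = g x).
Proof.
move=> Hag P.
have [a1 [b1 [c1 [e1 F1]]]] := gform2 KL g1.
have [a2 [b2 [c2 [e2 F2]]]] := gform2 KL g2.
have [a3 [b3 [c3 [e3 F3]]]] := gform2 KL g3.
have z : r0 * r0 = r0 by ring.
have agree : forall u v (hu : u * u = r0) (hv : v * v = r0), u * v = r0 ->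
  (a1 + b1 * u + c1 * v + e1 * (u * v) = a2 + b2 * u + c2 * v + e2 * (u * v)) /\
  (a2 + b2 * u + c2 * v + e2 * (u * v) = a3 + b3 * u + c3 * v + e3 * (u * v)).
  move=> u v hu hv huv.
  have [E1 E2] := Hag (mkD_2 _ _ hu hv huv) (mkD2 _ _ hu hv) (fun i => erefl).
  move: E1 E2. rewrite F1 F2 F3 mkD2_val f2_0 f2_1. by split.
have [A12 A23] := agree _ _ z z z.
have Ea2 : a2 = a1.
  symmetry; apply sub0. apply: (combine1 A12). ring.
have Ea3 : a3 = a2.
  symmetry; apply sub0. apply: (combine1 A23). ring.
subst a2 a3.
have Eb2 : b2 = b1.
  symmetry; apply sub0; apply (kl_D KL) => u hu.
  have hz : u * r0 = r0 by ring.
  have [E _] := agree _ _ hu z hz. apply: (combine1 E). ring.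
have Eb3 : b3 = b2.
  symmetry; apply sub0; apply (kl_D KL) => u hu.
  have hz : u * r0 = r0 by ring.
  have [_ E] := agree _ _ hu z hz. apply: (combine1 E). ring.
have Ec2 : c2 = c1.
  symmetry; apply sub0; apply (kl_D KL) => u hu.
  have hz : r0 * u = r0 by ring.
  have [E _] := agree _ _ z hu hz. apply: (combine1 E). ring.
have Ec3 : c3 = c2.
  symmetry; apply sub0; apply (kl_D KL) => u hu.
  have hz : r0 * u = r0 by ring.
  have [_ E] := agree _ _ z hu hz. apply: (combine1 E). ring.
subst b2 b3 c2 c3.
pose g := fun x : Gty R => f4 a1 b1 c1 e1 (e2 - e1) (e3 - e2) (proj1_sig x).
exists g. split.
- rewrite /P => d x. cbv zeta.
  split; [|split]; move=> Hx; rewrite /g /f4 !Hx !vq0 !vq1 !vq2 !vq3 ?F1 ?F2 ?F3; ring.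
- move=> g' Hg'.
  have [a' [b' [c' [e' [f' [k' Fg]]]]]] := gformG KL g'.
  have H0 : forall u v (hu : u * u = r0) (hv : v * v = r0),
      a' + b' * u + c' * v + e' * (u * v) + f' * r0 + k' * r0
      = a1 + b1 * u + c1 * v + e1 * (u * v).
    move=> u v hu hv.
    have [E _] := Hg' (mkD2 _ _ hu hv) (mkG _ _ _ _ (relA _ _ hu hv)).
    have E' : g' (mkG _ _ _ _ (relA _ _ hu hv)) = g1 (mkD2 _ _ hu hv).
      by apply: E => i; rewrite mkG_val mkD2_val f2_0 f2_1.
    move: E'. rewrite Fg F1 mkG_val mkD2_val f2_0 f2_1 /f4 !vq0 !vq1 !vq2 !vq3. by [].
  have Hf : f' = e2 - e1.
    apply sub0; apply (kl_D2 KL) => u v hu hv.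
    have [_ [E _]] := Hg' (mkD2 _ _ hu hv) (mkG _ _ _ _ (relB _ _ hu hv)).
    have E' : g' (mkG _ _ _ _ (relB _ _ hu hv)) = g2 (mkD2 _ _ hu hv).
      by apply: E => i; rewrite mkG_val mkD2_val f2_0 f2_1.
    move: E'. rewrite Fg F2 mkG_val mkD2_val f2_0 f2_1 /f4 !vq0 !vq1 !vq2 !vq3 => E2'.
    have E1' := H0 u v hu hv.
    apply: (combine2 E1' E2'). ring.
  have Hk : k' = e3 - e2.
    apply sub0; apply (kl_D2 KL) => u v hu hv.
    have [_ [E _]] := Hg' (mkD2 _ _ hu hv) (mkG _ _ _ _ (relB _ _ hu hv)).
    have E' : g' (mkG _ _ _ _ (relB _ _ hu hv)) = g2 (mkD2 _ _ hu hv).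
      by apply: E => i; rewrite mkG_val mkD2_val f2_0 f2_1.
    have [_ [_ E3]] := Hg' (mkD2 _ _ hu hv) (mkG _ _ _ _ (relC _ _ hu hv)).
    have E3' : g' (mkG _ _ _ _ (relC _ _ hu hv)) = g3 (mkD2 _ _ hu hv).
      by apply: E3 => i; rewrite mkG_val mkD2_val f2_0 f2_1.
    move: E' E3'. rewrite !Fg F2 F3 !mkG_val !mkD2_val f2_0 f2_1 /f4 !vq0 !vq1 !vq2 !vq3 => E2' E3'.
    apply: (combine2 E2' E3'). ring.
  move=> x. have := relG x. cbv zeta. case=> h0 [h1 _].
  rewrite Fg /g /f4. apply: (combine1' (H0 _ _ h0 h1)). rewrite Hf Hk. ring.
Qed.

End S.


Theorem lemma5p3 (R : CRing) (HQ : is_Q_algebra R) (KL : KockLawvere R)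
  (g1 g2 g3 : D2 R -> R) :
  (* the restrictions to D(2) (along D(2) -> D^2) coincide *)
  (forall (e : D_2 R) (d : D2 R),
     (forall i, proj1_sig d i = proj1_sig e i) -> g1 d = g2 d /\ g2 d = g3 d) ->
  let P := fun g : Gty R -> R =>
    forall (d : D2 R) (x : Gty R),
      let d1 := proj1_sig d (inord 0) in
      let d2 := proj1_sig d (inord 1) in
      ((forall i, proj1_sig x i = vec4 d1 d2 (rzero R) (rzero R) i) -> g x = g1 d) /\
      ((forall i, proj1_sig x i = vec4 d1 d2 (rmul d1 d2) (rzero R) i) -> g x = g2 d) /\
      ((forall i, proj1_sig x i = vec4 d1 d2 (rmul d1 d2) (rmul d1 d2) i) -> g x = g3 d) in
  exists g : Gty R -> R, P g /\ (forall g' : Gty R -> R, P g' -> forall x, g' x = g x).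
Proof. exact: main_sec. Qed.
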